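(* The function $\mathrm{Eci}(x,\lambda)=\int_0^x \frac{e^{it\lambda}}{\cos t}\,dt$ satisfies \[ \mathrm{Eci}(x,\lambda)=e^{ix\lambda}\,\mathrm{L}\left(x-\frac{\pi}{2},\lambda\right)+i\,\mathrm{S}_{\pi/2}(\lambda), \] and admits the Laplace transform representation \[ \mathrm{Eci}(y,\lambda)=i\int_0^\infty e^{-\lambda u}\left(\frac{1}{\cosh u}-\frac{e^{i\lambda y}}{\cosh(u-iy)}\right)du. \]
   Context: Here $0<x,y<\pi/2$ and $\lambda$ is a real parameter (with $\lambda>-1$ for the Laplace integrals). $L(x,\mu)=\sum_{k=1}^\infty \frac{e^{ikx}}{k+\mu}$ and $\mathrm{L}(x,\lambda)=e^{-ix}L\left(2x,\frac{\lambda-1}{2}\right)=2\sum_{k=1}^\infty\frac{e^{(2k-1)ix}}{2k-1+\lambda}$, which has the representation $\mathrm{L}(x,\lambda)=\int_0^\infty\frac{e^{-\lambda u}du}{\sinh(u-ix)}$. The special value $\mathrm{S}_{\pi/2}(\lambda)=2\sum_{k=1}^\infty \frac{(-1)^{k-1}}{2k-1+\lambda}=\int_0^\infty\frac{e^{-\lambda u}}{\cosh u}du$. *)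

(* Defs.v *)
From Stdlib Require Import Reals.
From Coquelicot Require Export Coquelicot.
Open Scope R_scope.

Definition cexp (z : C) : C := (RtoC (exp (Re z)) * (cos (Im z), sin (Im z)))%C.
Definition ccosh (z : C) : C := ((cexp z + cexp (- z)) / RtoC 2)%C.

Definition Eci (x lam : R) : C :=
  RInt (V := C_R_CompleteNormedModule)
       (fun t => (cexp (Ci * RtoC (t * lam)) / RtoC (cos t))%C) 0 x.

(* general term of  L(x,λ) = 2 Σ_{k>=1} e^{(2k-1) i x}/(2k-1+λ)  (index n = k-1) *)
Definition L_term (x lam : R) (n : nat) : C :=
  (RtoC 2 * cexp (Ci * RtoC ((2 * INR n + 1) * x)) / RtoC (2 * INR n + 1 + lam))%C.

(* "L(x,λ) = v": the series defining L(x,λ) converges (partial sums) to v *)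
Definition is_Lval (x lam : R) (v : C) : Prop :=
  is_series (K := C_AbsRing) (V := C_NormedModule) (L_term x lam) v.

(* general term of  S_{π/2}(λ) = 2 Σ_{k>=1} (-1)^{k-1}/(2k-1+λ) *)
Definition S_term (lam : R) (n : nat) : R := 2 * (-1) ^ n / (2 * INR n + 1 + lam).

Definition is_Sval (lam : R) (s : R) : Prop := is_series (S_term lam) s.

(* Main.v *)
Require Import Defs.
From Stdlib Require Import Reals Lra Lia.
From Coquelicot Require Import Coquelicot.
Open Scope R_scope.

Lemma Ceq (a b c d : R) : a = c -> b = d -> ((a,b) : C) = (c,d).
Proof. intros -> ->; reflexivity. Qed.

Lemma cexp_i a : cexp (Ci * RtoC a) = (cos a, sin a).
Proof. unfold cexp, Ci, RtoC, Cmult; simpl.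
  replace (0 * a - 1 * 0) with 0 by ring. replace (0*0 + 1*a) with a by ring.
  rewrite exp_0. apply Ceq; ring. Qed.

Lemma norm_Cmod (x : C) : norm (K:=R_AbsRing) (V:=C_R_NormedModule) x = Cmod x.
Proof. destruct x as [a b]. unfold norm; simpl. unfold prod_norm, Cmod; simpl.
  unfold norm; simpl. unfold abs; simpl.
  rewrite !Rmult_1_r, <- !Rabs_mult, (Rabs_pos_eq (a*a)), (Rabs_pos_eq (b*b)); try reflexivity; nra. Qed.

Lemma minus_C (x y : C) : minus (G:=C_R_NormedModule) y x = Cminus y x.
Proof. destruct x, y; reflexivity. Qed.

Lemma Cdiv_R (z : C) (r : R) : r <> 0 -> Cdiv z (RtoC r) = (fst z / r, snd z / r).
Proof. intros H; destruct z as [a b]; unfold Cdiv, Cinv, Cmult, RtoC; simpl.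
  apply Ceq; field; auto. Qed.

Definition Ec (x mu : R) : R := RInt (fun t => cos (t*mu) / cos t) 0 x.
Definition Es (x mu : R) : R := RInt (fun t => sin (t*mu) / cos t) 0 x.

Lemma cos_pos_in x z : 0 < x < PI/2 -> 0 <= z <= x -> 0 < cos z.
Proof. intros Hx Hz. apply cos_gt_0; lra. Qed.

Lemma ex_Ec x mu : 0 < x < PI/2 -> ex_RInt (fun t => cos (t*mu) / cos t) 0 x.
Proof. intros Hx. apply (ex_RInt_continuous (V:=R_CompleteNormedModule)). intros z Hz.
  rewrite Rmin_left in Hz by lra. rewrite Rmax_right in Hz by lra.
  apply (ex_derive_continuous (V:=R_NormedModule)). auto_derive. assert (0 < cos z) by (eapply cos_pos_in; eauto). lra. Qed.

Lemma ex_Es x mu : 0 < x < PI/2 -> ex_RInt (fun t => sin (t*mu) / cos t) 0 x.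
Proof. intros Hx. apply (ex_RInt_continuous (V:=R_CompleteNormedModule)). intros z Hz.
  rewrite Rmin_left in Hz by lra. rewrite Rmax_right in Hz by lra.
  apply (ex_derive_continuous (V:=R_NormedModule)). auto_derive. assert (0 < cos z) by (eapply cos_pos_in; eauto). lra. Qed.

Lemma Eci_pair x mu : 0 < x < PI/2 -> Eci x mu = (Ec x mu, Es x mu).
Proof. intros Hx. unfold Eci.
  rewrite (RInt_ext (V:=C_R_CompleteNormedModule) _ (fun t => (cos (t*mu)/cos t, sin(t*mu)/cos t) : C)).
  2:{ intros t Ht. rewrite Rmin_left in Ht by lra. rewrite Rmax_right in Ht by lra.
      rewrite cexp_i, Cdiv_R. reflexivity. assert (0 < cos t) by (eapply cos_pos_in; eauto; lra). lra. }
  apply (is_RInt_unique (V:=C_R_CompleteNormedModule)).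
  apply (is_RInt_fct_extend_pair (U:=R_NormedModule) (V:=R_NormedModule)); simpl.
  - apply (RInt_correct (V:=R_CompleteNormedModule)). apply ex_Ec; auto.
  - apply (RInt_correct (V:=R_CompleteNormedModule)). apply ex_Es; auto.
Qed.

Lemma RInt_FTC (F f : R -> R) a b : (forall t, is_derive F t (f t)) -> (forall t, continuous f t) ->
  RInt f a b = F b - F a.
Proof. intros H1 H2. apply (is_RInt_unique (V:=R_CompleteNormedModule)).
  apply (is_RInt_derive (V:=R_CompleteNormedModule)); intros; auto. Qed.

Lemma Ec_rec x mu : 0 < x < PI/2 -> mu + 1 <> 0 ->
  Ec x mu + Ec x (mu+2) = 2 * sin ((mu+1)*x) / (mu+1).
Proof. intros Hx Hm. unfold Ec.
  rewrite <- (RInt_plus (V:=R_CompleteNormedModule)) by (apply ex_Ec; auto).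
  rewrite (RInt_ext (V:=R_CompleteNormedModule) _ (fun t => 2 * cos ((mu+1)*t))).
  2:{ intros t Ht. rewrite Rmin_left in Ht by lra. rewrite Rmax_right in Ht by lra.
      assert (0 < cos t) by (eapply cos_pos_in; eauto; lra).
      replace (t*mu) with ((mu+1)*t - t) by ring. replace (t*(mu+2)) with ((mu+1)*t + t) by ring.
      unfold plus; simpl. rewrite cos_minus, cos_plus. field. lra. }
  rewrite (RInt_FTC (fun t => 2 * sin ((mu+1)*t) / (mu+1))).
  - replace ((mu+1)*0) with 0 by ring. rewrite sin_0. field; auto.
  - intros t. auto_derive; auto. field; auto.
  - intros t. apply (ex_derive_continuous (V:=R_NormedModule)). auto_derive; auto.
Qed.

Lemma Es_rec x mu : 0 < x < PI/2 -> mu + 1 <> 0 ->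
  Es x mu + Es x (mu+2) = 2 * (1 - cos ((mu+1)*x)) / (mu+1).
Proof. intros Hx Hm. unfold Es.
  rewrite <- (RInt_plus (V:=R_CompleteNormedModule)) by (apply ex_Es; auto).
  rewrite (RInt_ext (V:=R_CompleteNormedModule) _ (fun t => 2 * sin ((mu+1)*t))).
  2:{ intros t Ht. rewrite Rmin_left in Ht by lra. rewrite Rmax_right in Ht by lra.
      assert (0 < cos t) by (eapply cos_pos_in; eauto; lra).
      replace (t*mu) with ((mu+1)*t - t) by ring. replace (t*(mu+2)) with ((mu+1)*t + t) by ring.
      unfold plus; simpl. rewrite sin_minus, sin_plus. field. lra. }
  rewrite (RInt_FTC (fun t => - 2 * cos ((mu+1)*t) / (mu+1))).
  - replace ((mu+1)*0) with 0 by ring. rewrite cos_0. field; auto.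
  - intros t. auto_derive; auto. field; auto.
  - intros t. apply (ex_derive_continuous (V:=R_NormedModule)). auto_derive; auto.
Qed.

Lemma RInt_FTC_loc (F f : R -> R) a b : a <= b ->
  (forall t, a <= t <= b -> is_derive F t (f t)) -> (forall t, a <= t <= b -> continuous f t) ->
  RInt f a b = F b - F a.
Proof. intros Hab H1 H2. apply (is_RInt_unique (V:=R_CompleteNormedModule)).
  apply (is_RInt_derive (V:=R_CompleteNormedModule)); intros t Ht;
  rewrite Rmin_left in Ht by lra; rewrite Rmax_right in Ht by lra; auto. Qed.

Lemma cos_ge_in x t : 0 < x < PI/2 -> 0 <= t <= x -> cos x <= cos t.
Proof. intros Hx Ht. destruct (Req_dec t x) as [->|Hne]. lra.
  left. apply cos_decreasing_1; lra. Qed.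

Lemma ex_cont_loc (f : R -> R) x : 0 < x -> (forall t, 0 <= t <= x -> ex_derive f t) -> ex_RInt f 0 x.
Proof. intros Hx H. apply (ex_RInt_continuous (V:=R_CompleteNormedModule)). intros z Hz.
  rewrite Rmin_left in Hz by lra. rewrite Rmax_right in Hz by lra.
  apply (ex_derive_continuous (V:=R_NormedModule)). auto. Qed.

Definition Kx (x : R) := 1 + 1 / cos x + x / (cos x)^2.

Lemma Kx_pos x : 0 < x < PI/2 -> 0 < Kx x.
Proof. intros Hx. assert (0 < cos x) by (apply cos_gt_0; lra). unfold Kx.
  assert (0 < 1 / cos x) by (apply Rdiv_lt_0_compat; lra).
  assert (0 < x / cos x ^2) by (apply Rdiv_lt_0_compat; [lra| apply pow_lt; lra]). lra. Qed.

Lemma abs_int_k (k : R -> R) x : 0 < x < PI/2 -> ex_RInt k 0 x ->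
  (forall t, 0 <= t <= x -> Rabs (k t) <= 1 / (cos x)^2) -> Rabs (RInt k 0 x) <= x / (cos x)^2.
Proof. intros Hx Hex Hb. eapply Rle_trans. apply abs_RInt_le_const; eauto; lra.
  unfold Rdiv. lra. Qed.

Lemma bound_k (s : R) x t : 0 < x < PI/2 -> 0 <= t <= x -> Rabs s <= 1 ->
  Rabs (s * sin t / (cos t)^2) <= 1 / (cos x)^2.
Proof. intros Hx Ht Hs. assert (0 < cos x) by (apply cos_gt_0; lra).
  assert (cos x <= cos t) by (apply cos_ge_in; auto).
  assert (Rabs (sin t) <= 1) by (apply Rabs_le; apply SIN_bound).
  unfold Rdiv. rewrite !Rabs_mult. rewrite Rabs_inv. rewrite (Rabs_pos_eq (cos t ^2)) by (apply pow_le; lra).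
  apply Rmult_le_compat. apply Rmult_le_pos; apply Rabs_pos. left; apply Rinv_0_lt_compat; apply pow_lt; lra.
  replace 1 with (1*1) by ring. apply Rmult_le_compat; auto; apply Rabs_pos.
  apply Rinv_le_contravar. apply pow_lt; lra. apply pow_incr; lra. Qed.

Lemma Ec_bound x mu : 0 < x < PI/2 -> Rabs (mu * Ec x mu) <= Kx x.
Proof. intros Hx. assert (Hc : 0 < cos x) by (apply cos_gt_0; lra).
  assert (Hct : forall t, 0 <= t <= x -> 0 < cos t) by (intros; eapply cos_pos_in; eauto).
  assert (Hk : ex_RInt (fun t => sin (t*mu) * sin t / (cos t)^2) 0 x).
  { apply ex_cont_loc. lra. intros t Ht. specialize (Hct t Ht). auto_derive. nra. }
  assert (H1 : RInt (fun t => mu * (cos (t*mu)/cos t) + sin (t*mu) * sin t / (cos t)^2) 0 x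
             = sin (x*mu) / cos x - sin (0*mu) / cos 0).
  { apply (RInt_FTC_loc (fun t => sin (t*mu) / cos t)). lra.
    - intros t Ht. specialize (Hct t Ht). auto_derive. lra. field. lra.
    - intros t Ht. specialize (Hct t Ht). apply (ex_derive_continuous (V:=R_NormedModule)). auto_derive. nra. }
  rewrite (RInt_plus (V:=R_CompleteNormedModule)) in H1.
  2:{ apply (ex_RInt_scal (V:=R_CompleteNormedModule)). apply ex_Ec; auto. }
  2: exact Hk.
  rewrite (RInt_scal (V:=R_CompleteNormedModule)) in H1.
  assert (H2 : mu * Ec x mu + RInt (fun t => sin (t*mu) * sin t / (cos t)^2) 0 x =
     sin (x * mu) / cos x - sin (0 * mu) / cos 0) by exact H1. clear H1.
  replace (0*mu) with 0 in H2 by ring. rewrite sin_0 in H2.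
  replace (mu * Ec x mu) with (sin (x*mu)/cos x - RInt (fun t => sin (t*mu) * sin t / (cos t)^2) 0 x) by (rewrite cos_0 in H2; unfold Rdiv in *; rewrite Rinv_1 in H2; lra).
  eapply Rle_trans. apply Rabs_triang. rewrite Rabs_Ropp.
  assert (Rabs (sin (x*mu) / cos x) <= 1 / cos x).
  { unfold Rdiv. rewrite Rabs_mult, Rabs_inv, (Rabs_pos_eq (cos x)) by lra.
    apply Rmult_le_compat_r. left; apply Rinv_0_lt_compat; lra. apply Rabs_le; apply SIN_bound. }
  assert (Rabs (RInt (fun t => sin (t*mu) * sin t / (cos t)^2) 0 x) <= x / (cos x)^2).
  { apply abs_int_k; auto. intros t Ht. apply bound_k; auto. apply Rabs_le; apply SIN_bound. }
  unfold Kx. lra. apply ex_Ec; auto. Qed.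

Lemma Es_bound x mu : 0 < x < PI/2 -> Rabs (mu * Es x mu) <= Kx x.
Proof. intros Hx. assert (Hc : 0 < cos x) by (apply cos_gt_0; lra).
  assert (Hct : forall t, 0 <= t <= x -> 0 < cos t) by (intros; eapply cos_pos_in; eauto).
  assert (Hk : ex_RInt (fun t => (- cos (t*mu)) * sin t / (cos t)^2) 0 x).
  { apply ex_cont_loc. lra. intros t Ht. specialize (Hct t Ht). auto_derive. nra. }
  assert (H1 : RInt (fun t => mu * (sin (t*mu)/cos t) + (- cos (t*mu)) * sin t / (cos t)^2) 0 x
             = (- cos (x*mu)) / cos x - (- cos (0*mu)) / cos 0).
  { apply (RInt_FTC_loc (fun t => (- cos (t*mu)) / cos t)). lra.
    - intros t Ht. specialize (Hct t Ht). auto_derive. lra. field. lra.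
    - intros t Ht. specialize (Hct t Ht). apply (ex_derive_continuous (V:=R_NormedModule)). auto_derive. nra. }
  rewrite (RInt_plus (V:=R_CompleteNormedModule)) in H1.
  2:{ apply (ex_RInt_scal (V:=R_CompleteNormedModule)). apply ex_Es; auto. }
  2: exact Hk.
  rewrite (RInt_scal (V:=R_CompleteNormedModule)) in H1.
  assert (H2 : mu * Es x mu + RInt (fun t => (- cos (t*mu)) * sin t / (cos t)^2) 0 x =
     (- cos (x * mu)) / cos x - (- cos (0 * mu)) / cos 0) by exact H1. clear H1.
  replace (0*mu) with 0 in H2 by ring. rewrite cos_0 in H2.
  replace (mu * Es x mu) with ((- cos (x*mu))/cos x + 1 - RInt (fun t => (- cos (t*mu)) * sin t / (cos t)^2) 0 x).
  2:{ unfold Rdiv in *; rewrite Rinv_1 in H2; lra. }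
  eapply Rle_trans. apply Rabs_triang. rewrite Rabs_Ropp.
  eapply Rle_trans. apply Rplus_le_compat_r. apply Rabs_triang.
  assert (Rabs ((- cos (x*mu)) / cos x) <= 1 / cos x).
  { unfold Rdiv. rewrite Rabs_mult, Rabs_inv, (Rabs_pos_eq (cos x)) by lra.
    apply Rmult_le_compat_r. left; apply Rinv_0_lt_compat; lra. rewrite Rabs_Ropp. apply Rabs_le; apply COS_bound. }
  assert (Rabs (RInt (fun t => (- cos (t*mu)) * sin t / (cos t)^2) 0 x) <= x / (cos x)^2).
  { apply abs_int_k; auto. intros t Ht. apply bound_k; auto. rewrite Rabs_Ropp. apply Rabs_le; apply COS_bound. }
  rewrite Rabs_R1. unfold Kx. lra. apply ex_Es; auto. Qed.

Lemma lim_bound (g : R -> R) (K lam : R) : (forall mu, Rabs (mu * g mu) <= K) ->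
  is_lim_seq (fun N => g (lam + 2 * INR N)) 0.
Proof. intros H. apply is_lim_seq_spec. intros eps. destruct eps as [e He]; simpl.
  destruct (INR_unbounded (Rabs (K/e) + Rabs lam + 1)) as [N HN].
  exists N. intros n Hn. apply le_INR in Hn.
  set (mu := lam + 2 * INR n).
  assert (Hmu : K / e < mu /\ 0 < mu).
  { unfold mu. pose proof (Rle_abs (K/e)). pose proof (Rle_abs (-lam)). rewrite Rabs_Ropp in *.
    pose proof (Rabs_pos (K/e)). pose proof (pos_INR N). lra. }
  assert (HK : K < e * mu).
  { destruct Hmu as [H1 H2]. apply (Rmult_lt_compat_l e) in H1; auto.
    replace (e * (K/e)) with K in H1 by (field; lra). lra. }
  specialize (H mu). rewrite Rabs_mult, (Rabs_pos_eq mu) in H by lra.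
  rewrite Rminus_0_r. nra. Qed.

Definition an (lam : R) (n : nat) : R := 2 * INR n + 1 + lam.

Lemma tel_c x lam N : 0 < x < PI/2 -> (forall n, an lam n <> 0) ->
  @eq R (sum_n (fun n => 2 * (-1)^n * sin (an lam n * x) / an lam n) N)
  (Ec x lam + (-1)^N * Ec x (lam + 2 * INR (S N))).
Proof. intros Hx Ha. induction N as [|N IH].
  - rewrite sum_O. simpl pow. rewrite Rmult_1_r.
    pose proof (Ec_rec x lam Hx) as H. specialize (Ha O). unfold an in *. rewrite ?S_INR, ?INR_0 in *.
    replace (2*0+1+lam) with (lam+1) in * by ring. rewrite <- H by auto.
    replace (lam + 2*(0+1)) with (lam+2) by ring. ring.
  - rewrite sum_Sn, IH. change (plus ?a ?b) with (Rplus a b).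
    pose proof (Ec_rec x (lam + 2 * INR (S N)) Hx) as H. specialize (Ha (S N)). unfold an in *.
    replace (lam + 2 * INR (S N) + 1) with (2 * INR (S N) + 1 + lam) in H by ring.
    replace (lam + 2 * INR (S N) + 2) with (lam + 2 * INR (S (S N))) in H by (rewrite !S_INR; ring).
    specialize (H Ha).
    replace (Ec x (lam + 2 * INR (S (S N)))) with (2 * sin ((2 * INR (S N) + 1 + lam) * x) / (2 * INR (S N) + 1 + lam) - Ec x (lam + 2 * INR (S N))) by lra.
    rewrite <- tech_pow_Rmult. field. auto.
Qed.

Lemma tel_s x lam N : 0 < x < PI/2 -> (forall n, an lam n <> 0) ->
  @eq R (sum_n (fun n => 2 * (-1)^n * (1 - cos (an lam n * x)) / an lam n) N)
  (Es x lam + (-1)^N * Es x (lam + 2 * INR (S N))).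
Proof. intros Hx Ha. induction N as [|N IH].
  - rewrite sum_O. simpl pow. rewrite Rmult_1_r.
    pose proof (Es_rec x lam Hx) as H. specialize (Ha O). unfold an in *. rewrite ?S_INR, ?INR_0 in *.
    replace (2*0+1+lam) with (lam+1) in * by ring. rewrite <- H by auto.
    replace (lam + 2*(0+1)) with (lam+2) by ring. ring.
  - rewrite sum_Sn, IH. change (plus ?a ?b) with (Rplus a b).
    pose proof (Es_rec x (lam + 2 * INR (S N)) Hx) as H. specialize (Ha (S N)). unfold an in *.
    replace (lam + 2 * INR (S N) + 1) with (2 * INR (S N) + 1 + lam) in H by ring.
    replace (lam + 2 * INR (S N) + 2) with (lam + 2 * INR (S (S N))) in H by (rewrite !S_INR; ring).
    specialize (H Ha).
    replace (Es x (lam + 2 * INR (S (S N)))) with (2 * (1 - cos ((2 * INR (S N) + 1 + lam) * x)) / (2 * INR (S N) + 1 + lam) - Es x (lam + 2 * INR (S N))) by lra.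
    rewrite <- tech_pow_Rmult. field. auto.
Qed.

Lemma trig_shift (phi : R) (n : nat) :
  cos (phi - (2 * INR n + 1) * (PI/2)) = (-1)^n * sin phi /\
  sin (phi - (2 * INR n + 1) * (PI/2)) = - ((-1)^n * cos phi).
Proof. induction n as [|n [IH1 IH2]].
  - rewrite INR_0. replace ((2*0+1)*(PI/2)) with (PI/2) by ring. simpl pow.
    rewrite cos_minus, sin_minus, cos_PI2, sin_PI2. split; ring.
  - replace (phi - (2 * INR (S n) + 1) * (PI/2)) with ((phi - (2 * INR n + 1) * (PI/2)) - PI)
      by (rewrite S_INR; field).
    set (y := phi - (2 * INR n + 1) * (PI/2)) in *.
    rewrite (cos_minus y PI), (sin_minus y PI), cos_PI, sin_PI, IH1, IH2. rewrite <- tech_pow_Rmult. split; ring.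
Qed.

Lemma term_id x lam n : an lam n <> 0 ->
  (cexp (Ci * RtoC (x*lam)) * L_term (x - PI/2) lam n + Ci * RtoC (S_term lam n))%C
  = (2 * (-1)^n * sin (an lam n * x) / an lam n, 2 * (-1)^n * (1 - cos (an lam n * x)) / an lam n).
Proof. intros Ha. unfold L_term, S_term. fold (an lam n). rewrite !cexp_i.
  replace ((2 * INR n + 1) * (x - PI/2)) with ((2 * INR n + 1) * x - (2 * INR n + 1) * (PI/2)) by ring.
  destruct (trig_shift ((2 * INR n + 1) * x) n) as [H1 H2]. rewrite H1, H2.
  replace (an lam n * x) with ((2 * INR n + 1) * x + x * lam) by (unfold an; ring).
  rewrite sin_plus, cos_plus.
  unfold Cdiv, Cinv, Cmult, Cplus, Ci, RtoC; simpl. fold (an lam n).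
  apply Ceq; field; auto. Qed.

Notation sumC := (@sum_n (NormedModule.AbelianMonoid C_AbsRing C_NormedModule)).

Lemma sum_id x lam N : 0 < x < PI/2 -> (forall n, an lam n <> 0) ->
  (cexp (Ci * RtoC (x*lam)) * sumC (L_term (x - PI/2) lam) N + Ci * RtoC (sum_n (S_term lam) N))%C
  = (Ec x lam + (-1)^N * Ec x (lam + 2 * INR (S N)), Es x lam + (-1)^N * Es x (lam + 2 * INR (S N))).
Proof. intros Hx Ha. rewrite <- tel_c, <- tel_s by auto.
  induction N as [|N IH].
  - rewrite !sum_O. rewrite term_id by auto. reflexivity.
  - rewrite !sum_Sn.
    change (plus ?a ?b) with (Cplus a b) at 1.
    change (plus (sum_n (S_term lam) N) (S_term lam (S N))) with (Rplus (sum_n (S_term lam) N) (S_term lam (S N))).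
    set (A := sumC (L_term (x - PI / 2) lam) N) in *.
    set (B := sum_n (S_term lam) N) in *.
    transitivity (Cplus (cexp (Ci * RtoC (x*lam)) * A + Ci * RtoC B) (cexp (Ci * RtoC (x*lam)) * L_term (x - PI/2) lam (S N) + Ci * RtoC (S_term lam (S N))))%C.
    + rewrite RtoC_plus. ring.
    + rewrite IH, term_id by auto. reflexivity.
Qed.

Lemma to_R (a b : R) : @eq R a b -> a = b.
Proof. auto. Qed.

Lemma lim_bound2 (g : R -> R) (K lam M0 : R) : (forall mu, M0 < mu -> Rabs (mu * g mu) <= K) ->
  is_lim_seq (fun N => g (lam + 2 * INR N)) 0.
Proof. intros H. apply is_lim_seq_spec. intros eps. destruct eps as [e He]; simpl.
  destruct (INR_unbounded (Rabs (K/e) + Rabs lam + Rabs M0 + 1)) as [N HN].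
  exists N. intros n Hn. apply le_INR in Hn.
  set (mu := lam + 2 * INR n).
  assert (Hmu : K / e < mu /\ 0 < mu /\ M0 < mu).
  { unfold mu. pose proof (Rle_abs (K/e)). pose proof (Rle_abs (-lam)). pose proof (Rle_abs M0). rewrite Rabs_Ropp in *.
    pose proof (Rabs_pos (K/e)). pose proof (Rabs_pos M0). pose proof (pos_INR N). lra. }
  assert (HK : K < e * mu).
  { destruct Hmu as [H1 H2]. apply (Rmult_lt_compat_l e) in H1; auto.
    replace (e * (K/e)) with K in H1 by (field; lra). lra. }
  specialize (H mu ltac:(lra)). rewrite Rabs_mult, (Rabs_pos_eq mu) in H by lra.
  rewrite Rminus_0_r. nra. Qed.

Lemma S_conv lam : ex_series (S_term lam).
Proof.
  destruct (INR_unbounded (Rabs lam)) as [N0 HN0].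
  pose proof (Rle_abs (-lam)) as Hl. rewrite Rabs_Ropp in Hl.
  set (c := 2 * INR N0 + 1 + lam).
  assert (Hc : 0 < c) by (unfold c; pose proof (Rabs_pos lam); lra).
  set (Un := fun k : nat => 2 / (2 * INR k + c)).
  assert (HUn : forall k, 0 < 2 * INR k + c) by (intros k; pose proof (pos_INR k); lra).
  assert (Hdec : Un_decreasing Un).
  { intros k. unfold Un. rewrite S_INR. apply Rmult_le_compat_l. lra.
    apply Rinv_le_contravar. apply HUn. lra. }
  assert (Hcv : Un_cv Un 0).
  { apply is_lim_seq_Reals.
    assert (E : forall k, Un k = (fun mu => 2 / (mu + c)) (0 + 2 * INR k)).
    { intros k. unfold Un. f_equal. ring. }
    apply (is_lim_seq_ext _ _ _ (fun k => eq_sym (E k))).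
    apply (lim_bound2 (fun mu => 2 / (mu + c)) 2 0 0). intros mu Hmu.
    rewrite Rabs_pos_eq. apply (Rmult_le_reg_r (mu + c)). lra. unfold Rdiv.
    rewrite Rmult_assoc, Rmult_assoc, Rinv_l by lra. nra.
    apply Rmult_le_pos. lra. apply Rlt_le, Rdiv_lt_0_compat; lra. }
  destruct (alternated_series Un Hdec Hcv) as [l Hl2].
  apply (ex_series_incr_n _ N0).
  exists ((-1)^N0 * l).
  apply (is_series_ext (K:=R_AbsRing) (V:=R_NormedModule) (fun k => (-1)^N0 * (tg_alt Un k))).
  { intros k. unfold tg_alt, Un, S_term.
    apply to_R. rewrite plus_INR, pow_add. unfold c. field. pose proof (HUn k). unfold c in H. lra. }
  apply (is_series_scal_l (K:=R_AbsRing) (V:=R_NormedModule) ((-1)^N0)). apply is_series_Reals. exact Hl2.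
Qed.

Lemma C_lim (u : nat -> C) (l : C) : is_lim_seq (fun n => fst (u n)) (fst l) ->
  is_lim_seq (fun n => snd (u n)) (snd l) ->
  filterlim (T:=nat) (U:=NormedModule.UniformSpace C_AbsRing C_NormedModule) u eventually (locally l).
Proof. intros H1 H2. apply filterlim_locally. intros eps.
  apply is_lim_seq_spec in H1. apply is_lim_seq_spec in H2.
  specialize (H1 eps). specialize (H2 eps).
  generalize (filter_and _ _ H1 H2). apply filter_imp. intros n [A B].
  split; assumption. Qed.

Lemma lim_alt (g : nat -> R) : is_lim_seq g 0 -> is_lim_seq (fun N => (-1)^N * g (S N)) 0.
Proof. intros H. apply (proj2 (is_lim_seq_abs_0 _)).
  apply (is_lim_seq_ext (fun N => Rabs (g (S N)))).
  { intros n. rewrite Rabs_mult, pow_1_abs. ring. }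
  apply (proj1 (is_lim_seq_abs_0 (fun N => g (S N)))). apply -> (is_lim_seq_incr_1 g). exact H. Qed.

Lemma lim_PQ x lam : 0 < x < PI/2 ->
  is_lim_seq (fun N => Ec x lam + (-1)^N * Ec x (lam + 2 * INR (S N))) (Ec x lam) /\
  is_lim_seq (fun N => Es x lam + (-1)^N * Es x (lam + 2 * INR (S N))) (Es x lam).
Proof. intros Hx. split.
  - replace (Finite (Ec x lam)) with (Rbar_plus (Ec x lam) 0) by (simpl; f_equal; ring).
    apply is_lim_seq_plus'. apply is_lim_seq_const.
    apply (lim_alt (fun N => Ec x (lam + 2 * INR N))).
    apply (lim_bound (Ec x) (Kx x)). intros; apply Ec_bound; auto.
  - replace (Finite (Es x lam)) with (Rbar_plus (Es x lam) 0) by (simpl; f_equal; ring).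
    apply is_lim_seq_plus'. apply is_lim_seq_const.
    apply (lim_alt (fun N => Es x (lam + 2 * INR N))).
    apply (lim_bound (Es x) (Kx x)). intros; apply Es_bound; auto.
Qed.

Lemma part1 x lam : 0 < x < PI / 2 ->
     (forall n : nat, 2 * INR n + 1 + lam <> 0) ->
     exists (v : C) (s : R),
       is_Lval (x - PI / 2) lam v /\ is_Sval lam s /\
       Eci x lam = (cexp (Ci * RtoC (x * lam)) * v + Ci * RtoC s)%C.
Proof. intros Hx Ha'.
  assert (Ha : forall n, an lam n <> 0) by exact Ha'.
  destruct (S_conv lam) as [s Hs].
  set (c := cexp (Ci * RtoC (x * lam))).
  set (d := (cos (x*lam), - sin (x*lam)) : C).
  assert (Hcd : (d * c = 1)%C).
  { unfold c. rewrite cexp_i. unfold d, Cmult; simpl. apply Ceq.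
    pose proof (sin2_cos2 (x*lam)). unfold Rsqr in H. lra. ring. }
  exists (d * (Eci x lam - Ci * RtoC s))%C, s. split; [|split].
  - unfold is_Lval, is_series.
    apply (filterlim_ext (fun N => d * (((Ec x lam + (-1)^N * Ec x (lam + 2 * INR (S N)))%R,
                                          (Es x lam + (-1)^N * Es x (lam + 2 * INR (S N)))%R) - Ci * RtoC (sum_n (S_term lam) N)))%C).
    { intros N. rewrite <- (sum_id x lam N Hx Ha). fold c.
      transitivity ((d * c) * sumC (L_term (x - PI / 2) lam) N)%C. ring. rewrite Hcd. ring. }
    rewrite (Eci_pair x lam Hx).
    destruct (lim_PQ x lam Hx) as [HP HQ].
    assert (HS : is_lim_seq (sum_n (S_term lam)) s) by exact Hs.
    apply C_lim; unfold d, Cminus, Cmult, Cplus, Copp, Ci, RtoC; cbn [fst snd].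
    + apply (is_lim_seq_ext (fun N => cos (x*lam) * (Ec x lam + (-1)^N * Ec x (lam + 2 * INR (S N)))
            + sin (x*lam) * ((Es x lam + (-1)^N * Es x (lam + 2 * INR (S N))) - sum_n (S_term lam) N))).
      { intros N. ring. }
      match goal with |- is_lim_seq _ (Finite ?L) =>
        replace L with (cos (x*lam) * Ec x lam + sin (x*lam) * (Es x lam - s)) by ring end.
      apply is_lim_seq_plus'. apply is_lim_seq_mult'; auto. apply is_lim_seq_const.
      apply is_lim_seq_mult'. apply is_lim_seq_const. apply is_lim_seq_minus'; auto.
    + apply (is_lim_seq_ext (fun N => cos (x*lam) * ((Es x lam + (-1)^N * Es x (lam + 2 * INR (S N))) - sum_n (S_term lam) N)
            - sin (x*lam) * (Ec x lam + (-1)^N * Ec x (lam + 2 * INR (S N))))).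
      { intros N. ring. }
      match goal with |- is_lim_seq _ (Finite ?L) =>
        replace L with (cos (x*lam) * (Es x lam - s) - sin (x*lam) * Ec x lam) by ring end.
      apply is_lim_seq_minus'. apply is_lim_seq_mult'. apply is_lim_seq_const. apply is_lim_seq_minus'; auto.
      apply is_lim_seq_mult'; auto. apply is_lim_seq_const.
  - exact Hs.
  - transitivity ((c * d) * (Eci x lam - Ci * RtoC s) + Ci * RtoC s)%C.
    assert (Hdc : (c*d = 1)%C) by (rewrite Cmult_comm; exact Hcd).
    rewrite Hdc. ring. ring.
Qed.

Definition pol (a t : R) : C := (a * cos t, a * sin t).

Lemma pol_mult a t b t' : (pol a t * pol b t' = pol (a*b) (t+t'))%C.
Proof. unfold pol, Cmult; simpl. rewrite cos_plus, sin_plus. apply Ceq; ring. Qed.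

Lemma pol_1_0 : pol 1 0 = 1%C.
Proof. unfold pol. rewrite cos_0, sin_0. apply Ceq; ring. Qed.

Lemma cexp_pair a b : cexp (a, b) = pol (exp a) b.
Proof. unfold cexp, pol, Cmult, RtoC; simpl. apply Ceq; ring. Qed.

Lemma RtoC_pair_mult (a p q : R) : (RtoC a * (p, q))%C = (a*p, a*q).
Proof. unfold Cmult, RtoC; simpl. apply Ceq; ring. Qed.

Definition Wf (u s : R) : C := pol (exp (-u)) s.

Lemma W_nz u s : Wf u s <> 0%C.
Proof. intros H. assert (H2 : (pol (exp u) (-s) * Wf u s)%C = 1%C).
  { unfold Wf. rewrite pol_mult. rewrite <- exp_plus. replace (u + -u) with 0 by ring.
    replace (-s + s) with 0 by ring. rewrite exp_0. apply pol_1_0. }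
  rewrite H in H2. rewrite Cmult_0_r in H2. apply C1_nz. auto. Qed.

Lemma ccosh_W u s : ccosh (RtoC u - Ci * RtoC s) = ((/ Wf u s + Wf u s) / 2)%C.
Proof.
  assert (E1 : (RtoC u - Ci * RtoC s)%C = (u, -s)%R).
  { unfold Cminus, Cplus, Copp, Cmult, Ci, RtoC; simpl. apply Ceq; ring. }
  assert (E2 : (- ((u, (-s)%R) : C))%C = ((-u)%R, s)).
  { unfold Copp; simpl. apply Ceq; ring. }
  unfold ccosh. rewrite E1, E2, !cexp_pair.
  assert (H2 : (pol (exp u) (-s) * Wf u s)%C = 1%C).
  { unfold Wf. rewrite pol_mult. rewrite <- exp_plus. replace (u + -u) with 0 by ring.
    replace (-s + s) with 0 by ring. rewrite exp_0. apply pol_1_0. }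
  assert (H3 : pol (exp u) (-s) = (/ Wf u s)%C).
  { pose proof (W_nz u s). transitivity (pol (exp u) (-s) * Wf u s * / Wf u s)%C. field; auto. rewrite H2. ring. }
  rewrite H3. fold (Wf u s). reflexivity. Qed.

Fixpoint csum (g : nat -> C) (N : nat) : C :=
  match N with O => 0%C | S N => (csum g N + g N)%C end.

Definition Psi (lam u s : R) : C := (pol (exp (-lam*u)) (lam*s) / ((/ Wf u s + Wf u s) / 2))%C.
Definition Pn (lam u s : R) (n : nat) : C := pol (exp (- (an lam n) * u)) (an lam n * s).

Lemma P0 lam u s : Pn lam u s 0 = (pol (exp (-lam*u)) (lam*s) * Wf u s)%C.
Proof. unfold Pn, Wf. rewrite pol_mult, <- exp_plus. unfold an. rewrite INR_0.
  f_equal; [f_equal|]; ring. Qed.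

Lemma PS lam u s n : Pn lam u s (S n) = (Pn lam u s n * (Wf u s * Wf u s))%C.
Proof. unfold Pn, Wf. rewrite !pol_mult, <- !exp_plus. unfold an. rewrite S_INR.
  f_equal; [f_equal|]; ring. Qed.

Lemma decomp lam u s N : (1 + Wf u s * Wf u s)%C <> 0%C ->
  Psi lam u s = (csum (fun n => RtoC (2 * (-1)^n) * Pn lam u s n) N
                 + RtoC (2 * (-1)^N) * Pn lam u s N / (1 + Wf u s * Wf u s))%C.
Proof. intros HD. pose proof (W_nz u s) as HW. induction N as [|N IH].
  - simpl csum. rewrite P0. unfold Psi. simpl pow. rewrite Rmult_1_r. field. auto.
  - rewrite IH. simpl csum. rewrite PS. rewrite <- tech_pow_Rmult.
    rewrite !RtoC_mult. field. auto. Qed.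

Definition fint (lam y u : R) : C :=
  (Ci * (RtoC (exp (- lam * u)) *
          (RtoC (/ cosh u) - cexp (Ci * RtoC (lam * y)) / ccosh ((RtoC u) - Ci * RtoC y))))%C.

Lemma RtoC_pair_mult' (a t : R) : (RtoC a * (cos t, sin t))%C = pol a t.
Proof. rewrite RtoC_pair_mult. reflexivity. Qed.

Lemma pol_R a : pol a 0 = RtoC a.
Proof. unfold pol, RtoC. rewrite cos_0, sin_0. apply Ceq; ring. Qed.

Lemma f_Psi lam y u : fint lam y u = (Ci * (Psi lam u 0 - Psi lam u y))%C.
Proof. unfold fint. rewrite ccosh_W, cexp_i.
  assert (E1 : (RtoC (exp (- lam * u)) * ((cos (lam * y), sin (lam * y)) / ((/ Wf u y + Wf u y) / 2)))%C
             = Psi lam u y).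
  { unfold Psi. rewrite <- (RtoC_pair_mult' (exp (-lam*u))). unfold Cdiv. ring. }
  assert (E0 : (RtoC (exp (- lam * u)) * RtoC (/ cosh u))%C = Psi lam u 0).
  { unfold Psi, Wf. rewrite Rmult_0_r, !pol_R.
    assert (Ha : exp (-u) <> 0) by (apply Rgt_not_eq, exp_pos).
    rewrite <- (RtoC_inv (exp (-u)) Ha), <- RtoC_plus.
    assert (Hc : cosh u = (/ exp (- u) + exp (- u)) / 2).
    { unfold cosh. rewrite exp_Ropp, Rinv_inv. reflexivity. }
    unfold Cdiv. f_equal.
    assert (Hq : 0 < / exp (- u) + exp (- u)).
    { pose proof (exp_pos (-u)). pose proof (Rinv_0_lt_compat _ H). lra. }
    rewrite Hc. change (Cmult ?x (Cinv ?y)) with (Cdiv x y). rewrite <- (RtoC_div _ 2) by lra. rewrite RtoC_inv. reflexivity. lra. }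
  rewrite <- E0, <- E1. ring.
Qed.

Definition Tn (lam y u : R) (n : nat) : C :=
  ((2 * (-1)^n * exp (- (an lam n) * u) * sin (an lam n * y))%R,
   (2 * (-1)^n * exp (- (an lam n) * u) * (1 - cos (an lam n * y)))%R).
Definition rho (lam u s : R) (N : nat) : C := (Pn lam u s N / (1 + Wf u s * Wf u s))%C.
Definition RN (lam y u : R) (N : nat) : C := (Ci * RtoC (2 * (-1)^N) * (rho lam u 0 N - rho lam u y N))%C.

Lemma csum_lin (A B T : nat -> C) N : (forall n, T n = Ci * (A n - B n))%C ->
  (Ci * (csum A N - csum B N))%C = csum T N.
Proof. intros H. induction N as [|N IH]; simpl.
  - ring.
  - rewrite <- IH, H. ring. Qed.

Lemma f_decomp lam y u N : (1 + Wf u 0 * Wf u 0)%C <> 0%C -> (1 + Wf u y * Wf u y)%C <> 0%C ->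
  fint lam y u = (csum (Tn lam y u) N + RN lam y u N)%C.
Proof. intros H0 Hy. rewrite f_Psi, (decomp lam u 0 N H0), (decomp lam u y N Hy).
  rewrite <- (csum_lin (fun n => RtoC (2 * (-1)^n) * Pn lam u 0 n)%C (fun n => RtoC (2 * (-1)^n) * Pn lam u y n)%C (Tn lam y u)).
  - unfold RN, rho, Cdiv. ring.
  - intros n. unfold Tn, Pn. rewrite Rmult_0_r, pol_R. unfold pol, Cmult, Cminus, Cplus, Copp, Ci, RtoC; simpl.
    apply Ceq; ring.
Qed.

Lemma Cmod_ge (z : C) m : 0 <= m -> m * m <= fst z ^ 2 + snd z ^ 2 -> m <= Cmod z.
Proof. intros Hm H. unfold Cmod. rewrite <- (sqrt_square m) by auto.
  apply sqrt_le_1_alt. lra. Qed.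

Lemma Cmod_pol a t : Cmod (pol a t) = Rabs a.
Proof. unfold Cmod, pol; simpl. rewrite <- sqrt_Rsqr_abs. f_equal. unfold Rsqr.
  pose proof (sin2_cos2 t). unfold Rsqr in H. transitivity (a*a*(sin t * sin t + cos t * cos t)). ring. rewrite H. ring. Qed.

Lemma WW u s : (1 + Wf u s * Wf u s)%C = ((1 + exp (-u) * exp (-u) * cos (s + s))%R, (exp (-u) * exp (-u) * sin (s+s))%R).
Proof. unfold Wf. rewrite pol_mult. unfold pol, Cplus, RtoC; simpl. apply Ceq; ring. Qed.

Lemma den_y u y : 0 < y < PI/2 -> sin (2*y) <= Cmod (1 + Wf u y * Wf u y)%C.
Proof. intros Hy. rewrite WW. assert (Hs : 0 < sin (2*y)) by (apply sin_gt_0; lra).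
  apply Cmod_ge. lra. simpl. replace (y+y) with (2*y) by ring.
  pose proof (sin2_cos2 (2*y)). unfold Rsqr in H.
  set (r := exp (-u) * exp (-u)). set (c := cos (2*y)) in *. set (s := sin (2*y)) in *.
  assert (0 <= (c + r) * (c + r)) by (pose proof (Rle_0_sqr (c+r)) as Hq; unfold Rsqr in Hq; exact Hq).
  assert (E : (1 + r*c)*(1 + r*c) + (r*s)*(r*s) = s*s + (c+r)*(c+r)).
  { transitivity (s*s + (c+r)*(c+r) + (1 - r*r)*(1 - (s*s + c*c))). ring. rewrite H. ring. }
  rewrite !Rmult_1_r. lra. Qed.

Lemma den_0 u : 1 <= Cmod (1 + Wf u 0 * Wf u 0)%C.
Proof. rewrite WW. replace (0+0) with 0 by ring. rewrite cos_0, sin_0.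
  apply Cmod_ge. lra. simpl. pose proof (exp_pos (-u)).
  assert (0 < exp (-u) * exp (-u)) by nra. nra. Qed.

Lemma den_nz u s m : 0 < m -> m <= Cmod (1 + Wf u s * Wf u s)%C -> (1 + Wf u s * Wf u s)%C <> 0%C.
Proof. intros Hm H E. rewrite E, Cmod_0 in H. lra. Qed.

Lemma Cmod_rho lam u s N m : 0 < m -> m <= Cmod (1 + Wf u s * Wf u s)%C ->
  Cmod (rho lam u s N) <= exp (- (an lam N) * u) / m.
Proof. intros Hm H. unfold rho. rewrite Cmod_div by (eapply den_nz; eauto).
  unfold Pn. rewrite Cmod_pol, Rabs_pos_eq by (apply Rlt_le, exp_pos).
  unfold Rdiv. apply Rmult_le_compat_l. apply Rlt_le, exp_pos.
  apply Rinv_le_contravar; auto. Qed.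

Definition Kb (y : R) := 2 * (1 + 1 / sin (2*y)).

Lemma Cmod_RN lam y u N : 0 < y < PI/2 ->
  Cmod (RN lam y u N) <= Kb y * exp (- (an lam N) * u).
Proof. intros Hy. assert (Hs : 0 < sin (2*y)) by (apply sin_gt_0; lra).
  unfold RN. rewrite !Cmod_mult, Cmod_Ci, Cmod_R, Rabs_mult, pow_1_abs, Rabs_pos_eq by lra.
  assert (H1 := Cmod_rho lam u 0 N 1 ltac:(lra) (den_0 u)).
  assert (H2 := Cmod_rho lam u y N (sin (2*y)) Hs (den_y u y Hy)).
  assert (H3 : Cmod (rho lam u 0 N - rho lam u y N) <= Cmod (rho lam u 0 N) + Cmod (rho lam u y N)).
  { unfold Cminus. rewrite <- (Cmod_opp (rho lam u y N)). apply Cmod_triangle. }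
  unfold Kb. pose proof (exp_pos (- an lam N * u)).
  rewrite Rdiv_1_r in H1. unfold Rdiv in *. lra. Qed.

(* continuity of C-valued functions of a real variable (C with its product structure) *)
Notation CU := (NormedModule.UniformSpace R_AbsRing C_R_NormedModule).

Lemma contC_intro (h : R -> C) x : continuous (fun u => fst (h u)) x -> continuous (fun u => snd (h u)) x ->
  continuous (U:=CU) h x.
Proof. intros H1 H2. unfold continuous in *. apply filterlim_locally. intros eps.
  pose proof (proj1 (filterlim_locally _ _) H1 eps) as H1'.
  pose proof (proj1 (filterlim_locally _ _) H2 eps) as H2'. clear H1 H2. rename H1' into H1. rename H2' into H2.
  generalize (filter_and _ _ H1 H2). apply filter_imp. intros n [A B]. split; assumption. Qed.

Lemma contC_fst (h : R -> C) x : continuous (U:=CU) h x -> continuous (fun u => fst (h u)) x.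
Proof. intros H. unfold continuous in *. apply (filterlim_locally (U:=R_UniformSpace)). intros eps.
  pose proof (proj1 (filterlim_locally _ _) H eps) as H'.
  apply (filter_imp _ _ (fun u (Hu : ball (h x) eps (h u)) => proj1 Hu)) in H'. exact H'. Qed.

Lemma contC_snd (h : R -> C) x : continuous (U:=CU) h x -> continuous (fun u => snd (h u)) x.
Proof. intros H. unfold continuous in *. apply (filterlim_locally (U:=R_UniformSpace)). intros eps.
  pose proof (proj1 (filterlim_locally _ _) H eps) as H'.
  apply (filter_imp _ _ (fun u (Hu : ball (h x) eps (h u)) => proj2 Hu)) in H'. exact H'. Qed.

Lemma contR_plus (f g : R -> R) x : continuous f x -> continuous g x -> continuous (fun u => f u + g u) x.
Proof. intros; apply (continuous_plus (V:=R_NormedModule) f g); auto. Qed.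
Lemma contR_opp (f : R -> R) x : continuous f x -> continuous (fun u => - f u) x.
Proof. intros; apply (continuous_opp (V:=R_NormedModule) f); auto. Qed.
Lemma contR_minus (f g : R -> R) x : continuous f x -> continuous g x -> continuous (fun u => f u - g u) x.
Proof. intros; apply (continuous_minus (V:=R_NormedModule) f g); auto. Qed.
Lemma contR_mult (f g : R -> R) x : continuous f x -> continuous g x -> continuous (fun u => f u * g u) x.
Proof. intros; apply (continuous_mult (K:=R_AbsRing) f g); auto. Qed.

Lemma contC_plus (h1 h2 : R -> C) x : continuous (U:=CU) h1 x -> continuous (U:=CU) h2 x ->
  continuous (U:=CU) (fun u => h1 u + h2 u)%C x.
Proof. intros H1 H2. apply contC_intro; simpl; apply contR_plus;
  first [apply contC_fst | apply contC_snd]; auto. Qed.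

Lemma contC_opp (h1 : R -> C) x : continuous (U:=CU) h1 x -> continuous (U:=CU) (fun u => - h1 u)%C x.
Proof. intros H1. apply contC_intro; simpl; apply contR_opp;
  first [apply contC_fst | apply contC_snd]; auto. Qed.

Lemma contC_minus (h1 h2 : R -> C) x : continuous (U:=CU) h1 x -> continuous (U:=CU) h2 x ->
  continuous (U:=CU) (fun u => h1 u - h2 u)%C x.
Proof. intros H1 H2. unfold Cminus. apply contC_plus; auto. apply contC_opp; auto. Qed.

Lemma contC_mult (h1 h2 : R -> C) x : continuous (U:=CU) h1 x -> continuous (U:=CU) h2 x ->
  continuous (U:=CU) (fun u => h1 u * h2 u)%C x.
Proof. intros H1 H2. apply contC_intro; simpl.
  - apply contR_minus; apply contR_mult; first [apply contC_fst | apply contC_snd]; auto.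
  - apply contR_plus; apply contR_mult; first [apply contC_fst | apply contC_snd]; auto. Qed.

Lemma contC_const (c : C) (x : R) : continuous (T:=R_UniformSpace) (U:=CU) (fun _ => c) x.
Proof. apply continuous_const. Qed.

Lemma contR_sq (f : R -> R) x : continuous f x -> continuous (fun u => f u ^ 2) x.
Proof. intros H. simpl. apply contR_mult; auto. apply contR_mult; auto. apply continuous_const. Qed.

Lemma contC_inv (h : R -> C) x : continuous (U:=CU) h x -> h x <> 0%C ->
  continuous (U:=CU) (fun u => / h u)%C x.
Proof. intros H Hn.
  assert (Hd : fst (h x) ^ 2 + snd (h x) ^ 2 <> 0).
  { intros E. apply Hn. apply Cmod_eq_0. unfold Cmod. rewrite E. apply sqrt_0. }
  assert (Hc : continuous (fun u => / (fst (h u) ^ 2 + snd (h u) ^ 2)) x).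
  { apply (continuous_Rinv_comp (fun u => fst (h u) ^ 2 + snd (h u) ^ 2)); auto.
    apply contR_plus; apply contR_sq; first [apply contC_fst | apply contC_snd]; auto. }
  apply contC_intro; unfold Cinv; simpl; unfold Rdiv.
  - apply contR_mult; auto. apply contC_fst; auto.
  - apply contR_mult; auto. apply contR_opp. apply contC_snd; auto. Qed.

Lemma contC_pol (g k : R -> R) x : continuous g x -> continuous k x -> continuous (U:=CU) (fun u => pol (g u) (k u)) x.
Proof. intros H1 H2. apply contC_intro; unfold pol; simpl; apply contR_mult; auto.
  apply continuous_cos_comp; auto. apply continuous_sin_comp; auto. Qed.

Lemma contR_expl (a : R) x : continuous (fun u => exp (a * u)) x.
Proof. apply (ex_derive_continuous (V:=R_NormedModule)). auto_derive. auto. Qed.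

Lemma cont_W s x : continuous (U:=CU) (fun u => Wf u s) x.
Proof. unfold Wf. apply (contC_pol (fun u => exp (-u)) (fun _ => s)).
  apply (ex_derive_continuous (V:=R_NormedModule)). auto_derive. auto. apply continuous_const. Qed.

Lemma cont_rho lam s N x : (forall u, (1 + Wf u s * Wf u s)%C <> 0%C) ->
  continuous (U:=CU) (fun u => rho lam u s N) x.
Proof. intros Hd. unfold rho, Cdiv.
  apply (contC_mult (fun u => Pn lam u s N) (fun u => / (1 + Wf u s * Wf u s))%C).
  - unfold Pn. apply (contC_pol (fun u => exp (- an lam N * u)) (fun _ => an lam N * s)).
    apply contR_expl. apply continuous_const.
  - apply (contC_inv (fun u => 1 + Wf u s * Wf u s)%C); auto.
    apply (contC_plus (fun _ => 1%C) (fun u => Wf u s * Wf u s)%C). apply contC_const.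
    apply (contC_mult (fun u => Wf u s) (fun u => Wf u s)); apply cont_W. Qed.

Lemma den_all_0 : forall u, (1 + Wf u 0 * Wf u 0)%C <> 0%C.
Proof. intros u. apply (den_nz u 0 1). lra. apply den_0. Qed.

Lemma den_all_y y : 0 < y < PI/2 -> forall u, (1 + Wf u y * Wf u y)%C <> 0%C.
Proof. intros Hy u. apply (den_nz u y (sin (2*y))). apply sin_gt_0; lra. apply den_y; auto. Qed.

Lemma cont_RN lam y N x : 0 < y < PI/2 -> continuous (U:=CU) (fun u => RN lam y u N) x.
Proof. intros Hy. unfold RN.
  apply (contC_mult (fun _ => Ci * RtoC (2 * (-1)^N))%C (fun u => rho lam u 0 N - rho lam u y N)%C).
  apply contC_const.
  apply (contC_minus (fun u => rho lam u 0 N) (fun u => rho lam u y N)); apply cont_rho.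
  apply den_all_0. apply den_all_y; auto. Qed.

Lemma ex_RN lam y N a b : 0 < y < PI/2 -> ex_RInt (V:=C_R_CompleteNormedModule) (fun u => RN lam y u N) a b.
Proof. intros Hy. apply (ex_RInt_continuous (V:=C_R_CompleteNormedModule)). intros z _. apply cont_RN; auto. Qed.

Lemma is_RInt_FTC (F f : R -> R) a b l : (forall t, is_derive F t (f t)) -> (forall t, continuous f t) ->
  F b - F a = l -> is_RInt f a b l.
Proof. intros H1 H2 H3. rewrite <- H3. apply (is_RInt_derive (V:=R_CompleteNormedModule)); intros; auto. Qed.

Definition In (lam y b : R) (n : nat) : C :=
  ((2 * (-1)^n * (1 - exp (- (an lam n) * b)) / an lam n * sin (an lam n * y))%R,
   (2 * (-1)^n * (1 - exp (- (an lam n) * b)) / an lam n * (1 - cos (an lam n * y)))%R).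

Lemma is_RInt_Tn lam y b n : an lam n <> 0 ->
  is_RInt (V:=C_R_NormedModule) (fun u => Tn lam y u n) 0 b (In lam y b n).
Proof. intros Ha. apply (is_RInt_fct_extend_pair (U:=R_NormedModule) (V:=R_NormedModule)); simpl.
  - apply (is_RInt_FTC (fun u => - 2 * (-1)^n * exp (- (an lam n) * u) / an lam n * sin (an lam n * y))).
    + intros t. auto_derive. auto. field. auto.
    + intros t. apply (ex_derive_continuous (V:=R_NormedModule)). auto_derive. auto.
    + replace (- an lam n * 0) with 0 by ring. rewrite exp_0. field. auto.
  - apply (is_RInt_FTC (fun u => - 2 * (-1)^n * exp (- (an lam n) * u) / an lam n * (1 - cos (an lam n * y)))).
    + intros t. auto_derive. auto. field. auto.
    + intros t. apply (ex_derive_continuous (V:=R_NormedModule)). auto_derive. auto.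
    + replace (- an lam n * 0) with 0 by ring. rewrite exp_0. field. auto.
Qed.

Lemma is_RInt_csum lam y b N : (forall n, an lam n <> 0) ->
  is_RInt (V:=C_R_NormedModule) (fun u => csum (Tn lam y u) N) 0 b (csum (In lam y b) N).
Proof. intros Ha. induction N as [|N IH]; simpl.
  - apply (is_RInt_fct_extend_pair (U:=R_NormedModule) (V:=R_NormedModule)); simpl;
    apply (is_RInt_FTC (fun _ => 0)); try (intros; auto_derive; auto; fail); try (intros; apply continuous_const); ring.
  - apply (is_RInt_plus (V:=C_R_NormedModule)); auto. apply is_RInt_Tn; auto.
Qed.

Lemma is_RInt_fint lam y b N : 0 < y < PI/2 -> (forall n, an lam n <> 0) ->
  is_RInt (V:=C_R_NormedModule) (fint lam y) 0 b
    (csum (In lam y b) N + RInt (V:=C_R_CompleteNormedModule) (fun u => RN lam y u N) 0 b)%C.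
Proof. intros Hy Ha.
  apply (is_RInt_ext (V:=C_R_NormedModule) (fun u => csum (Tn lam y u) N + RN lam y u N)%C).
  { intros u _. rewrite (f_decomp lam y u N). reflexivity. apply den_all_0. apply den_all_y; auto. }
  apply (is_RInt_plus (V:=C_R_NormedModule)). apply is_RInt_csum; auto.
  apply (RInt_correct (V:=C_R_CompleteNormedModule)). apply ex_RN; auto. Qed.

Lemma RN_int_bound lam y b N : 0 < y < PI/2 -> 0 <= b -> 0 < an lam N ->
  Cmod (RInt (V:=C_R_CompleteNormedModule) (fun u => RN lam y u N) 0 b) <= Kb y / an lam N.
Proof. intros Hy Hb Ha. rewrite <- norm_Cmod.
  assert (Hs : 0 < sin (2*y)) by (apply sin_gt_0; lra).
  assert (HK : 0 < Kb y).
  { unfold Kb. assert (0 < 1 / sin (2*y)) by (apply Rdiv_lt_0_compat; lra). lra. }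
  eapply Rle_trans.
  apply (norm_RInt_le (V:=C_R_NormedModule) (fun u => RN lam y u N) (fun u => Kb y * exp (- an lam N * u)) 0 b
          _ (Kb y * (1 - exp (- an lam N * b)) / an lam N)); auto.
  - intros u _. rewrite norm_Cmod. apply Cmod_RN; auto.
  - apply (RInt_correct (V:=C_R_CompleteNormedModule)). apply ex_RN; auto.
  - apply (is_RInt_FTC (fun u => - Kb y * exp (- an lam N * u) / an lam N)).
    + intros t. auto_derive. auto. field. lra.
    + intros t. apply (ex_derive_continuous (V:=R_NormedModule)). auto_derive. auto.
    + replace (- an lam N * 0) with 0 by ring. rewrite exp_0. field. lra.
  - pose proof (exp_pos (- an lam N * b)). unfold Rdiv.
    apply Rmult_le_compat_r. left; apply Rinv_0_lt_compat; lra. nra.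
Qed.

Lemma Cmod_le_sum (z : C) : Cmod z <= Rabs (fst z) + Rabs (snd z).
Proof. destruct z as [a b]. unfold Cmod; simpl.
  rewrite <- (sqrt_square (Rabs a + Rabs b)) by (pose proof (Rabs_pos a); pose proof (Rabs_pos b); lra).
  apply sqrt_le_1_alt. pose proof (Rabs_pos a); pose proof (Rabs_pos b).
  rewrite !Rmult_1_r.
  assert (Rabs a * Rabs a = a * a) by (rewrite <- Rabs_mult; apply Rabs_pos_eq; nra).
  assert (Rabs b * Rabs b = b * b) by (rewrite <- Rabs_mult; apply Rabs_pos_eq; nra).
  nra. Qed.

Definition Iinf (lam y : R) (n : nat) : C :=
  ((2 * (-1)^n / an lam n * sin (an lam n * y))%R,
   (2 * (-1)^n / an lam n * (1 - cos (an lam n * y)))%R).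

Lemma diff_bound (a c b s : R) (n : nat) : 0 < c <= a -> 0 <= b ->
  Rabs (2 * (-1)^n * (1 - exp (- a * b)) / a * s + - (2 * (-1)^n / a * s)) <= 2 * exp (- c * b) / c * Rabs s.
Proof. intros Hc Hb.
  replace (2 * (-1)^n * (1 - exp (- a * b)) / a * s + - (2 * (-1)^n / a * s))
    with (- (2 * (-1)^n * (exp (- a * b) / a) * s)) by (field; lra).
  rewrite Rabs_Ropp, !Rabs_mult, pow_1_abs, Rabs_pos_eq by lra.
  rewrite (Rabs_pos_eq (exp (-a*b)/a)) by (apply Rlt_le, Rdiv_lt_0_compat; [apply exp_pos|lra]).
  assert (exp (- a * b) <= exp (- c * b)).
  { assert (Hle : - a * b <= - c * b) by nra.
    destruct (Rle_lt_or_eq_dec _ _ Hle) as [Hlt|Heq]. left. apply exp_increasing. exact Hlt. rewrite Heq. lra. }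
  assert (exp (- a * b) / a <= exp (- c * b) / c).
  { unfold Rdiv. apply Rmult_le_compat. apply Rlt_le, exp_pos. left; apply Rinv_0_lt_compat; lra. auto.
    apply Rinv_le_contravar; lra. }
  pose proof (Rabs_pos s). unfold Rdiv in *. nra. Qed.

Lemma In_tail lam y b n : -1 < lam -> 0 <= b ->
  Cmod (In lam y b n - Iinf lam y n)%C <= 6 * exp (- (1 + lam) * b) / (1 + lam).
Proof. intros Hl Hb. eapply Rle_trans. apply Cmod_le_sum.
  assert (Ha : 1 + lam <= an lam n) by (unfold an; pose proof (pos_INR n); lra).
  unfold In, Iinf, Cminus, Cplus, Copp; simpl.
  pose proof (diff_bound (an lam n) (1 + lam) b (sin (an lam n * y)) n ltac:(lra) Hb) as H1.
  pose proof (diff_bound (an lam n) (1 + lam) b (1 - cos (an lam n * y)) n ltac:(lra) Hb) as H2.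
  assert (Rabs (sin (an lam n * y)) <= 1) by (apply Rabs_le; apply SIN_bound).
  assert (Rabs (1 - cos (an lam n * y)) <= 2) by (apply Rabs_le; pose proof (COS_bound (an lam n * y)); lra).
  assert (0 <= 2 * exp (- (1 + lam) * b) / (1 + lam)) by (apply Rlt_le, Rdiv_lt_0_compat; [pose proof (exp_pos (- (1+lam)*b)); lra | lra]).
  replace (6 * exp (- (1 + lam) * b) / (1 + lam)) with (3 * (2 * exp (- (1 + lam) * b) / (1 + lam))) by (field; lra).
  nra. Qed.

Lemma csum_diff (A B : nat -> C) N m : (forall n, Cmod (A n - B n)%C <= m) ->
  Cmod (csum A N - csum B N)%C <= INR N * m.
Proof. intros H. induction N as [|N IH]; simpl csum.
  - rewrite INR_0. assert (E : ((0 - 0)%C : C) = 0%C) by (apply injective_projections; simpl; ring).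
    rewrite E, Cmod_0. lra.
  - rewrite S_INR. replace (csum A N + A N - (csum B N + B N))%C with ((csum A N - csum B N) + (A N - B N))%C by ring.
    eapply Rle_trans. apply Cmod_triangle. specialize (H N). lra. Qed.

Lemma csum_Iinf lam y M : csum (Iinf lam y) (S M) =
  (sum_n (fun n => 2 * (-1)^n * sin (an lam n * y) / an lam n) M,
   sum_n (fun n => 2 * (-1)^n * (1 - cos (an lam n * y)) / an lam n) M).
Proof. induction M as [|M IH].
  - simpl csum. rewrite !sum_O. unfold Iinf, Cplus; simpl. apply Ceq; unfold Rdiv; ring.
  - change (csum (Iinf lam y) (S (S M))) with (csum (Iinf lam y) (S M) + Iinf lam y (S M))%C.
    rewrite IH, !sum_Sn. unfold Iinf, Cplus; simpl. apply Ceq; unfold plus; simpl; unfold Rdiv; ring. Qed.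

Lemma exp_tail_small (K c e : R) : 0 < K -> 0 < c -> 0 < e ->
  forall b, K / (c * e) < b -> K * exp (- c * b) < e.
Proof. intros HK Hc He b Hb.
  assert (Hb0 : 0 < b). { assert (0 < K / (c*e)) by (apply Rdiv_lt_0_compat; nra). lra. }
  assert (H1 : c * b < exp (c * b)) by (pose proof (exp_ineq1 (c*b) ltac:(nra)); lra).
  assert (H2 : exp (- c * b) = / exp (c * b)) by (rewrite <- exp_Ropp; f_equal; ring).
  rewrite H2. pose proof (exp_pos (c*b)).
  assert (H3 : K < e * (c * b)).
  { apply (Rmult_lt_compat_l (c*e)) in Hb; [|nra]. unfold Rdiv in Hb.
    replace (c * e * (K * / (c * e))) with K in Hb by (field; lra). nra. }
  apply (Rmult_lt_reg_r (exp (c*b))); auto. rewrite Rmult_assoc, Rinv_l by lra. nra. Qed.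

Lemma part2 y lam : 0 < y < PI/2 -> -1 < lam ->
  is_RInt_gen (V := C_R_CompleteNormedModule) (fint lam y) (at_point 0) (Rbar_locally p_infty) (Eci y lam).
Proof. intros Hy Hl.
  assert (Hapos : forall n, 1 + lam <= an lam n) by (intros n; unfold an; pose proof (pos_INR n); lra).
  assert (Ha : forall n, an lam n <> 0) by (intros n; specialize (Hapos n); lra).
  assert (Hs : 0 < sin (2*y)) by (apply sin_gt_0; lra).
  assert (HKb : 0 < Kb y).
  { unfold Kb. assert (0 < 1 / sin (2*y)) by (apply Rdiv_lt_0_compat; lra). lra. }
  unfold is_RInt_gen, filterlimi, filter_le, filtermapi.
  intros P [eps HP]. set (e := pos eps). assert (He : 0 < e) by apply cond_pos.
  destruct (lim_PQ y lam Hy) as [HP1 HQ1].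
  apply is_lim_seq_spec in HP1. apply is_lim_seq_spec in HQ1.
  assert (He6 : 0 < e/6) by lra. assert (He3 : 0 < e/3) by lra.
  specialize (HP1 (mkposreal _ He6)). specialize (HQ1 (mkposreal _ He6)).
  assert (HK1 : is_lim_seq (fun M => (fun mu => Kb y / (mu + 3)) (lam + 2 * INR M)) 0).
  { apply (lim_bound2 (fun mu => Kb y / (mu + 3)) (Kb y) lam 0). intros mu Hmu.
    rewrite Rabs_pos_eq. apply (Rmult_le_reg_r (mu + 3)). lra. unfold Rdiv.
    rewrite Rmult_assoc, Rmult_assoc, Rinv_l by lra. nra.
    apply Rmult_le_pos. lra. apply Rlt_le, Rdiv_lt_0_compat; lra. }
  apply is_lim_seq_spec in HK1. specialize (HK1 (mkposreal _ He3)).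
  destruct (filter_and _ _ (filter_and _ _ HP1 HQ1) HK1) as [M HM].
  specialize (HM M (Nat.le_refl M)). destruct HM as [[HM1 HM2] HM3]. cbn [pos] in HM1, HM2, HM3.
  set (Kt := INR (S M) * 6 / (1 + lam)).
  assert (HKt : 0 < Kt) by (unfold Kt; pose proof (pos_INR M); rewrite S_INR; apply Rdiv_lt_0_compat; [lra|lra]).
  set (b0 := Kt / ((1 + lam) * (e/3))).
  apply Filter_prod with (Q := fun a => a = 0) (R := fun b => b0 < b).
  - reflexivity.
  - exists b0. auto.
  - intros a b -> Hb. simpl.
    assert (Hb0 : 0 < b). { assert (0 < b0) by (unfold b0; apply Rdiv_lt_0_compat; nra). lra. }
    exists (csum (In lam y b) (S M) + RInt (V:=C_R_CompleteNormedModule) (fun u => RN lam y u (S M)) 0 b)%C.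
    split. apply is_RInt_fint; auto.
    apply HP. apply (norm_compat1 (V:=C_R_NormedModule)). rewrite minus_C, norm_Cmod.
    set (X1 := (csum (In lam y b) (S M) - csum (Iinf lam y) (S M))%C).
    set (X2 := (csum (Iinf lam y) (S M) - Eci y lam)%C).
    set (X3 := RInt (V:=C_R_CompleteNormedModule) (fun u => RN lam y u (S M)) 0 b).
    replace (csum (In lam y b) (S M) + X3 - Eci y lam)%C with (X1 + X2 + X3)%C by (unfold X1, X2; ring).
    assert (B1 : Cmod X1 < e / 3).
    { unfold X1. eapply Rle_lt_trans. apply csum_diff. intros n. apply In_tail; lra.
      replace (INR (S M) * (6 * exp (- (1 + lam) * b) / (1 + lam))) with (Kt * exp (- (1 + lam) * b))
        by (unfold Kt; field; lra).
      apply exp_tail_small; auto; lra. }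
    assert (B2 : Cmod X2 < e / 3).
    { unfold X2. rewrite csum_Iinf, tel_c, tel_s, Eci_pair by auto.
      eapply Rle_lt_trans. apply Cmod_le_sum. unfold Cminus, Cplus, Copp; cbn [fst snd]. unfold Rminus in *. lra. }
    assert (B3 : Cmod X3 < e / 3).
    { unfold X3. eapply Rle_lt_trans. apply RN_int_bound; auto. lra. apply (Rlt_le_trans _ (1+lam)). lra. auto.
      replace (an lam (S M)) with (lam + 2 * INR M + 3) by (unfold an; rewrite S_INR; ring).
      rewrite Rminus_0_r in HM3. eapply Rle_lt_trans. apply Rle_abs. exact HM3. }
    eapply Rle_lt_trans. apply Cmod_triangle. eapply Rle_lt_trans. apply Rplus_le_compat_r. apply Cmod_triangle.
    unfold e in *. lra.
Qed.

Theorem proposition8 :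
  (forall x lam : R, 0 < x < PI / 2 ->
     (forall n : nat, 2 * INR n + 1 + lam <> 0) ->
     exists (v : C) (s : R),
       is_Lval (x - PI / 2) lam v /\ is_Sval lam s /\
       Eci x lam = (cexp (Ci * RtoC (x * lam)) * v + Ci * RtoC s)%C) /\
  (forall y lam : R, 0 < y < PI / 2 -> -1 < lam ->
     is_RInt_gen (V := C_R_CompleteNormedModule)
       (fun u : R => (Ci * (RtoC (exp (- lam * u)) *
          (RtoC (/ cosh u) - cexp (Ci * RtoC (lam * y)) / ccosh ((RtoC u) - Ci * RtoC y))))%C)
       (at_point 0) (Rbar_locally p_infty) (Eci y lam)).
Proof.
  split.
  - intros x lam Hx Ha. apply part1; auto.
  - intros y lam Hy Hl. exact (part2 y lam Hy Hl).
Qed.
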